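(* Let $\{K_1,\ldots,K_n\}$ be a strictly totally positive structure on $\mathbb{R}^n$. Then for every $j=2,\ldots,n$ the intersection $\operatorname{int}(K_j)\cap\barwedge^j\mathbb{R}^n$ contains a nonzero element.
   Context: A proper cone is a closed convex cone that is pointed and solid. $\wedge^j\mathbb{R}^n$ is the $j$th exterior power of $\mathbb{R}^n$; $\barwedge^j\mathbb{R}^n$ (the Grassmann cone) is the set of simple $j$-vectors, i.e. elements of the form $x_1\wedge\cdots\wedge x_j$ with $x_1,\ldots,x_j\in\mathbb{R}^n$. $\wedge^jA$ is the operator with $(\wedge^jA)(x_1\wedge\cdots\wedge x_j)=Ax_1\wedge\cdots\wedge Ax_j$. A totally positive structure is a family $\{K_1,\ldots,K_n\}$ with $K_j\subset\wedge^j\mathbb{R}^n$ a proper cone; a linear operator $A$ on $\mathbb{R}^n$ is GSTP with respect to it if $\wedge^jA(K_j\setminus\{0\})\subseteq\operatorname{int}(K_j)$ for all $j=1,\ldots,n$. The structure is strictly totally positive if there exists at least one operator that is GSTP with respect to it. *)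

(* Defs.v *)
(* The j-th exterior power of R^n is modelled concretely by
   its Plucker coordinates: functions on the j-element subsets of 'I_n
   (standard basis e_{i_1} /\ ... /\ e_{i_j}, i_1 < ... < i_j). *)
From HB Require Import structures.
From mathcomp Require Import all_boot all_order all_algebra.
From mathcomp Require Import reals.
Set Implicit Arguments. Unset Strict Implicit. Unset Printing Implicit Defensive.
Import Order.TTheory GRing.Theory Num.Theory.
Local Open Scope ring_scope.

Definition jsub (n j : nat) := {S : {set 'I_n} | #|S| == j}.

(* the j x j submatrix of A with rows in S and columns in T, both taken in
   increasing order (entries padded by 0 outside the range, never used when
   #|S| = #|T| = j) *)
Definition subm (R : ringType) (m p : nat) (A : 'M[R]_(m, p))
  (S : {set 'I_m}) (T : {set 'I_p}) (j : nat) : 'M[R]_j :=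
  \matrix_(a < j, b < j)
    nth 0 [seq nth 0 [seq A r c | c <- enum T] b | r <- enum S] a.

Definition wvec (R : ringType) (n j : nat) := jsub n j -> R.

(* x_1 /\ ... /\ x_j, where x_k is the k-th column of M *)
Definition wedge_cols (R : comRingType) (n j : nat) (M : 'M[R]_(n, j)) :
  wvec R n j := fun S => \det (subm M (val S) [set: 'I_j] j).

Definition simple_vec (R : comRingType) (n j : nat) (v : wvec R n j) : Prop :=
  exists M : 'M[R]_(n, j), v = wedge_cols M.

(* /\^j A : the j-th compound matrix acting on Plucker coordinates *)
Definition wedge_op (R : comRingType) (n j : nat) (A : 'M[R]_n)
  (v : wvec R n j) : wvec R n j :=
  fun S => \sum_(T : jsub n j) \det (subm A (val S) (val T) j) * v T.

(* Euclidean topology on /\^j R^n (via the sup norm of coordinates) *)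
Definition winterior (R : realType) (n j : nat) (K : wvec R n j -> Prop)
  (v : wvec R n j) : Prop :=
  exists2 e : R, 0 < e & forall w : wvec R n j,
    (forall S, `|w S - v S| < e) -> K w.

Definition wclosed (R : realType) (n j : nat) (K : wvec R n j -> Prop) : Prop :=
  forall v : wvec R n j,
    (forall e : R, 0 < e -> exists w, K w /\ forall S, `|w S - v S| < e) -> K v.

Definition convex_cone (R : realType) (n j : nat) (K : wvec R n j -> Prop) : Prop :=
  [/\ K (fun _ => 0),
      forall v w, K v -> K w -> K (fun S => v S + w S) &
      forall (a : R) v, 0 <= a -> K v -> K (fun S => a * v S)].

Definition pointed (R : realType) (n j : nat) (K : wvec R n j -> Prop) : Prop :=
  forall v, K v -> K (fun S => - v S) -> forall S, v S = 0.

Definition solid (R : realType) (n j : nat) (K : wvec R n j -> Prop) : Prop :=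
  exists v, winterior K v.

Definition proper_cone (R : realType) (n j : nat) (K : wvec R n j -> Prop) : Prop :=
  [/\ wclosed K, convex_cone K, pointed K & solid K].

Definition TP_structure (R : realType) (n : nat)
  (K : forall j : nat, wvec R n j -> Prop) : Prop :=
  forall j, (1 <= j <= n)%N -> proper_cone (K j).

Definition GSTP (R : realType) (n : nat)
  (K : forall j : nat, wvec R n j -> Prop) (A : 'M[R]_n) : Prop :=
  forall j, (1 <= j <= n)%N -> forall v : wvec R n j,
    K j v -> ~ (forall S, v S = 0) -> winterior (K j) (wedge_op A v).

Definition STP_structure (R : realType) (n : nat)
  (K : forall j : nat, wvec R n j -> Prop) : Prop :=
  TP_structure K /\ exists A : 'M[R]_n, GSTP K A.

(* Main.v *)
Require Import Defs.
From mathcomp Require Import all_boot all_order all_algebra all_fingroup.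
From mathcomp Require Import reals.
From mathcomp Require Import all_classical all_reals topology normedtype matrix_topology matrix_normedtype.
From mathcomp Require Import ring lra.
Set Implicit Arguments. Unset Strict Implicit. Unset Printing Implicit Defensive.
Import Order.TTheory GRing.Theory Num.Theory numFieldNormedType.Exports.
Local Open Scope ring_scope.

Section Gen.
Local Open Scope classical_set_scope.
Variables (R : realType) (I : finType).
Implicit Types (u v w : I -> R).

Definition nrm v : R := \big[Num.max/0]_i `|v i|.

Lemma nrm_ge0 v : 0 <= nrm v.
Proof. exact: bigmax_ge_id. Qed.

Lemma nrm_ge v i : `|v i| <= nrm v.
Proof. exact: le_bigmax. Qed.

Lemma nrm_le v m : 0 <= m -> (forall i, `|v i| <= m) -> nrm v <= m.
Proof. by move=> m0 H; apply: bigmax_le. Qed.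

Lemma nrm_lt v m : 0 < m -> (forall i, `|v i| < m) -> nrm v < m.
Proof. by move=> m0 H; apply: bigmax_lt. Qed.

Lemma nrm_eq0 v : nrm v = 0 -> forall i, v i = 0.
Proof.
move=> H i; apply/eqP; rewrite -normr_eq0 eq_le normr_ge0 andbT -H.
exact: nrm_ge.
Qed.

Lemma nrmD u v : nrm (fun i => u i + v i) <= nrm u + nrm v.
Proof.
apply: nrm_le; first by rewrite addr_ge0 ?nrm_ge0.
by move=> i; rewrite (le_trans (ler_normD _ _)) // lerD ?nrm_ge.
Qed.

Lemma nrmZ (c : R) v : nrm (fun i => c * v i) = `|c| * nrm v.
Proof.
apply/eqP; rewrite eq_le; apply/andP; split.
  apply: nrm_le; first by rewrite mulr_ge0 ?nrm_ge0.
  by move=> i; rewrite normrM ler_wpM2l ?nrm_ge.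
have [->|c0] := eqVneq c 0; first by rewrite normr0 mul0r nrm_ge0.
rewrite -ler_pdivlMl ?normr_gt0 //; apply: nrm_le.
  by rewrite mulr_ge0 ?invr_ge0 ?nrm_ge0.
move=> i; rewrite ler_pdivlMl ?normr_gt0 // -normrM.
exact: (nrm_ge (fun i => c * v i)).
Qed.

Lemma nrmN v : nrm (fun i => - v i) = nrm v.
Proof.
have := nrmZ (-1) v; rewrite normrN normr1 mul1r => <-.
by congr nrm; apply: funext => i; rewrite mulN1r.
Qed.


Lemma alpha_ex (K : (I -> R) -> Prop) (B : (I -> R) -> (I -> R)) (L : R)
    (p : I -> R) :
  0 < L ->
  (forall v, (forall e, 0 < e -> exists w, K w /\ forall i, `|w i - v i| < e) -> K v) ->
  (forall u v i, `|B u i - B v i| <= L * nrm (fun k => u k - v k)) ->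
  (forall z, K z -> 1 <= nrm z ->
     exists2 e, 0 < e & forall w, (forall i, `|w i - B z i| < e) -> K w) ->
  exists2 a, 0 < a & forall z, K z -> 1 <= nrm z -> (forall i, `|z i| <= 1) ->
    K (fun i => B z i - a * p i).
Proof.
move=> L0 Kcl BL Bpos.
pose N := #|I|.
pose psi (x : 'rV[R]_N) : I -> R := fun i => x ord0 (enum_rank i).
pose C := [set x : 'rV[R]_N | K (psi x) /\ 1 <= nrm (psi x) /\
   forall i, `|psi x i| <= 1].
have cC : compact C.
  apply: (@subclosed_compact _ C
     [set v : 'rV[R]_N | forall k, `[(-1 : R), 1]%classic (v ord0 k)]).
  - move=> x clx.
    have near_pt r : 0 < r -> exists y, C y /\ forall i, `|psi y i - psi x i| < r.
      move=> r0; have [y [Cy [_ Bxy]]] := clx _ (nbhsx_ballx x r r0).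
      exists y; split => // i; rewrite distrC; exact: (Bxy ord0 (enum_rank i)).
    split; last split.
    + apply: Kcl => e e0; have [y [[Ky _] H]] := near_pt e e0.
      by exists (psi y).
    + apply/ler_addgt0Pr => e e0; have [y [[_ [Hy _]] H]] := near_pt e e0.
      apply: (le_trans Hy).
      have -> : psi y = (fun i => psi x i + (psi y i - psi x i)).
        by apply: funext => i; rewrite addrC subrK.
      apply: (le_trans (nrmD _ _)); rewrite lerD2l.
      by apply: nrm_le => [|i]; [exact: ltW|exact: ltW].
    + move=> i; apply/(@ler_addgt0Pr R) => e e0; have [y [[_ [_ Hy]] H]] := near_pt e e0.
      have -> : psi x i = psi y i + (psi x i - psi y i) by rewrite addrC subrK.
      apply: (le_trans (ler_normD _ _)); apply: lerD => //.
      by rewrite distrC; exact: ltW.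
  - apply: (@rV_compact _ _ (fun=> `[(-1 : R), 1]%classic)) => k; exact: segment_compact.
  - move=> x [_ [_ H]] k; have := H (enum_val k); rewrite /psi enum_valK => Hk.
    by rewrite /= in_itv /= -ler_norml.
have FF : Filter ((0:R)^'+) by exact: at_right_proper_filter.
have := (compact_near_coveringP C).1 cC R ((0:R)^'+)
  (fun a x => K (fun i => B (psi x) i - a * p i)) FF.
case.
  move=> x [Kx [nx _]]; have [e e0 He] := Bpos _ Kx nx.
  pose d := Num.min (e / (2 * L)) (e / (2 * (nrm p + 1))).
  have np1 : 0 < nrm p + 1 by rewrite ltr_wpDl ?nrm_ge0.
  have d0 : 0 < d by rewrite lt_min !divr_gt0 ?mulr_gt0.
  exists (ball x d, [set a | 0 < a < d]) => /=.
    split; first exact: nbhsx_ballx.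
    near=> a; apply/andP; split; [near: a; exact: nbhs_right_gt|near: a; exact: nbhs_right_lt].
  move=> [x' a] [/= [_ bx'] /andP [a0 ad]]; apply: He => i.
  have -> : B (psi x') i - a * p i - B (psi x) i =
     (B (psi x') i - B (psi x) i) + (- (a * p i)) by rewrite addrAC.
  apply: (le_lt_trans (ler_normD _ _)); rewrite (splitr e); apply: ltr_leD.
    apply: (le_lt_trans (BL _ _ i)).
    have nd : nrm (fun k => psi x' k - psi x k) < d.
      apply: nrm_lt => // k; rewrite distrC; exact: (bx' ord0 (enum_rank k)).
    have : nrm (fun k => psi x' k - psi x k) < e / (2 * L).
      by apply: (lt_le_trans nd); rewrite ge_min lexx.
    rewrite ltr_pdivlMr ?mulr_gt0 // => H.
    rewrite ltr_pdivlMr //; set t := nrm _ in H *.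
    by have -> : L * t * 2 = t * (2 * L) by ring.
  rewrite normrN normrM gtr0_norm //.
  apply: (le_trans (ler_wpM2l (ltW a0) (nrm_ge p i))).
  apply: (le_trans (ler_wpM2l (ltW a0) (_ : nrm p <= nrm p + 1))).
    by rewrite lerDl.
  have : a <= e / (2 * (nrm p + 1)) by apply: (le_trans (ltW ad)); rewrite ge_min lexx orbT.
  rewrite ler_pdivlMr ?mulr_gt0 // => H.
  rewrite ler_pdivlMr //.
  by have -> : a * (nrm p + 1) * 2 = a * (2 * (nrm p + 1)) by ring.
move=> d d0 Hd; exists (d / 2); first by rewrite divr_gt0.
move=> z Kz nz bz.
pose phi : 'rV[R]_N := \row_k z (enum_val k).
have pz : psi phi = z by apply: funext => i; rewrite /psi mxE enum_rankK.
have := Hd (d / 2) _ _ phi; rewrite pz; apply => //.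
- rewrite /ball_ /= sub0r normrN gtr0_norm ?divr_gt0 //.
  by rewrite ltr_pdivrMr // ltr_pMr // ltr1n.
- by rewrite divr_gt0.
- by rewrite /C /= pz.
Unshelve. all: by end_near.
Qed.
End Gen.

Section CB.
Variables (R : comNzRingType) (n j : nat).

Definition eS (S : jsub n j) : 'I_j -> 'I_n :=
  fun a => enum_val (cast_ord (esym (eqP (valP S))) a).

Lemma eS_inj S : injective (eS S).
Proof. by move=> a b /enum_val_inj /cast_ord_inj. Qed.

Lemma eS_in S a : eS S a \in val S.
Proof. exact: enum_valP. Qed.

Lemma nth_enumS (S : jsub n j) (a : 'I_j) x0 : nth x0 (enum (val S)) a = eS S a.
Proof.
rewrite /eS /enum_val; apply: set_nth_default.
by rewrite -cardE (eqP (valP S)).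
Qed.

Lemma submE (A : 'M[R]_n) (S T : jsub n j) :
  subm A (val S) (val T) j = \matrix_(a, b) A (eS S a) (eS T b).
Proof.
apply/matrixP=> a b; rewrite !mxE.
have x0 : 'I_n := eS S a.
rewrite (nth_map x0) ?size_map -?cardE ?(eqP (valP S)) //.
rewrite (nth_map x0) ?size_map -?cardE ?(eqP (valP T)) //.
by rewrite !nth_enumS.
Qed.

Lemma submT (M : 'M[R]_(n, j)) (S : jsub n j) :
  subm M (val S) [set: 'I_j] j = \matrix_(a, b) M (eS S a) b.
Proof.
apply/matrixP=> a b; rewrite !mxE.
have x0 : 'I_n := eS S a.
rewrite (nth_map x0) ?size_map -?cardE ?(eqP (valP S)) //.
rewrite (nth_map b) ?size_map -?cardE ?cardsT ?card_ord //.
rewrite nth_enumS; congr (M _ _).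
have -> : enum [set: 'I_j] = enum 'I_j by apply: eq_enum => x; rewrite inE.
exact: nth_ord_enum.
Qed.


Lemma memeS (S : jsub n j) x : x \in val S -> exists a, x = eS S a.
Proof.
move=> Sx; exists (cast_ord (eqP (valP S)) (enum_rank_in Sx x)).
by rewrite /eS cast_ordK enum_rankK_in.
Qed.

Definition Hf (p : jsub n j * 'S_j) : {ffun 'I_j -> 'I_n} := [ffun i => eS p.1 (p.2 i)].

Lemma Hf_inj : injective Hf.
Proof.
move=> [T t] [T' t'] /ffunP E.
have ET : T = T'.
  apply: val_inj; apply/setP => x; apply/idP/idP => /memeS [a ->].
  - have := E (t^-1 a)%g; rewrite !ffunE /= permKV => ->; exact: eS_in.
  - have := E (t'^-1 a)%g; rewrite !ffunE /= permKV => <-; exact: eS_in.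
subst T'; congr (_, _); apply/permP => i.
by have := E i; rewrite !ffunE /= => /eS_inj.
Qed.

Lemma Hf_im (f : {ffun 'I_j -> 'I_n}) : injectiveb f = (f \in Hf @: finset.setT).
Proof.
apply/idP/idP; last first.
  case/imsetP => -[T t] _ ->; apply/injectiveP => a b.
  by rewrite !ffunE /= => /eS_inj /perm_inj.
move/injectiveP => finj.
have cT : #|[set f i | i : 'I_j]| == j by rewrite card_imset // card_ord.
pose T : jsub n j := exist (fun S : {set 'I_n} => #|S| == j) _ cT.
have Ti i : f i \in val T by rewrite /= imset_f.
pose t0 i := cast_ord (eqP (valP T)) (enum_rank_in (Ti i) (f i)).
have et0 i : eS T (t0 i) = f i by rewrite /eS /t0 cast_ordK enum_rankK_in.
have t0inj : injective t0.
  by move=> a b Eab; apply: finj; rewrite -!et0 Eab.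
apply/imsetP; exists (T, perm t0inj) => //.
by apply/ffunP => i; rewrite ffunE /= permE et0.
Qed.

Lemma cauchy_binet (P : 'M[R]_(j, n)) (Q : 'M[R]_(n, j)) :
  \det (P *m Q) = \sum_(T : jsub n j)
    \det (\matrix_(a, b) P a (eS T b)) * \det (\matrix_(a, b) Q (eS T a) b).
Proof.
transitivity (\sum_(f : {ffun 'I_j -> 'I_n}) \sum_(s : 'S_j) (-1) ^+ s *
    \prod_i (P i (f i) * Q (f i) (s i))).
  rewrite exchange_big; apply: eq_bigr => s _ /=; rewrite -big_distrr /=.
  congr (_ * _); rewrite -(bigA_distr_bigA (fun i k => P i k * Q k (s i))) /=.
  by apply: eq_bigr => i _; rewrite mxE.
transitivity (\sum_(f : {ffun 'I_j -> 'I_n})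
    \det (\matrix_(i, k) Q (f i) k) * \prod_i P i (f i)).
  apply: eq_bigr => f _; rewrite big_distrl /=; apply: eq_bigr => s _.
  rewrite big_split /= (mulrC (\prod_i P _ _)) mulrA; congr (_ * _ * _).
  by apply: eq_bigr => i _; rewrite mxE.
rewrite (bigID (fun f : {ffun 'I_j -> 'I_n} => injectiveb f)) /= [X in _ + X]big1 ?addr0;
  last first.
  move=> f /injectivePn [i1 [i2 Di12 Ef]].
  by rewrite (determinant_alternate Di12) ?mul0r // => k; rewrite !mxE Ef.
rewrite (eq_bigl (fun f => f \in Hf @: finset.setT)); last by move=> f; rewrite Hf_im.
rewrite big_imset /=; last by move=> p q _ _; apply: Hf_inj.
rewrite (eq_bigl (fun p => predT p.1 && predT p.2)); last by move=> p; rewrite inE.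
rewrite -(pair_big predT predT (fun T t => \det (\matrix_(i, k) Q (Hf (T, t) i) k) *
   \prod_i P i (Hf (T, t) i))) /=.
apply: eq_bigr => T _.
rewrite [X in _ = X * _]/(\det _) big_distrl /=; apply: eq_bigr => t _.
have -> : \matrix_(i, k) Q (Hf (T, t) i) k =
    perm_mx t *m \matrix_(a, b) Q (eS T a) b.
  by rewrite -row_permE; apply/matrixP => i k; rewrite !mxE ffunE.
rewrite det_mulmx det_perm -!mulrA; congr (_ * _); rewrite mulrC.
by congr (_ * _); apply: eq_bigr => i _; rewrite !mxE ffunE.
Qed.
End CB.

Section Wedge.
Variables (R : realType) (n j : nat).

Lemma wedge_simple (A : 'M[R]_n) (M : 'M[R]_(n, j)) :
  wedge_op A (wedge_cols M) = wedge_cols (A *m M).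
Proof.
apply: funext => S; rewrite /wedge_op /wedge_cols submT.
have -> : \matrix_(a, b) (A *m M) (eS S a) b =
    (\matrix_(a, i) A (eS S a) i) *m M.
  by apply/matrixP => a b; rewrite !mxE; apply: eq_bigr => i _; rewrite mxE.
rewrite cauchy_binet; apply: eq_bigr => T _; rewrite submE submT; congr (_ * _).
by congr (\det _); apply/matrixP => a b; rewrite !mxE.
Qed.

Lemma simple_B (A : 'M[R]_n) (v : wvec R n j) : simple_vec v -> simple_vec (wedge_op A v).
Proof. by move=> [M ->]; exists (A *m M); rewrite wedge_simple. Qed.


Lemma basis_simple (S : jsub n j) (c : R) (b0 : 'I_j) :
  simple_vec (fun T => if T == S then c else 0).
Proof.
pose E : 'M[R]_(n, j) :=
  \matrix_(i, b) (if i == eS S b then (if b == b0 then c else 1) else 0).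
exists E; apply: funext => T; rewrite /wedge_cols submT.
have [->|TS] := eqVneq T S.
  rewrite det_trig; last first.
    apply/forallP => a; apply/forallP => b; apply/implyP => ab; rewrite !mxE.
    rewrite (inj_eq (@eS_inj _ _ S)).
    have -> : (a == b) = false by apply/eqP => Eab; move: ab; rewrite Eab ltnn.
    by [].
  rewrite (bigD1 b0) //= !mxE !eqxx big1 ?mulr1 // => a /negbTE ab.
  by rewrite !mxE eqxx ab.
have [a Ha] : exists a, eS T a \notin val S.
  apply/existsP; apply: contraNT TS; rewrite negb_exists => /forallP H.
  apply/eqP/val_inj/eqP; rewrite eqEcard (eqP (valP T)) (eqP (valP S)) leqnn andbT.
  by apply/fintype.subsetP => x /memeS [b ->]; have := H b; rewrite negbK.
rewrite (expand_det_row _ a) big1 // => b _; rewrite !mxE.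
have -> : (eS T a == eS S b) = false.
  by apply: contraNF Ha => /eqP ->; exact: eS_in.
by rewrite mul0r.
Qed.

End Wedge.

Section Cone.
Variables (R : realType) (n j : nat) (K : wvec R n j -> Prop).
Hypotheses (Kcc : convex_cone K) (Kpt : pointed K) (S0 : jsub n j).
Implicit Types (u v w : wvec R n j).

Lemma Kext u v : K u -> (forall S, u S = v S) -> K v.
Proof. by move=> Ku E; have -> : v = u by apply: funext => S; rewrite E. Qed.

Lemma K0 : K (fun _ => 0).
Proof. by case: Kcc. Qed.

Lemma KC2 u v w (a b : R) : K u -> K v -> 0 <= a -> 0 <= b ->
  (forall S, w S = a * u S + b * v S) -> K w.
Proof.
case: Kcc => _ KD KZ Ku Kv a0 b0 E.
by apply: (Kext (KD _ _ (KZ a u a0 Ku) (KZ b v b0 Kv))) => S; rewrite E.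
Qed.

Lemma KZ1 u w (a : R) : K u -> 0 <= a -> (forall S, w S = a * u S) -> K w.
Proof.
move=> Ku a0 E; apply: (KC2 Ku Ku a0 (lexx 0)) => S; by rewrite E mul0r addr0.
Qed.

Lemma int_K v : winterior K v -> K v.
Proof. by case=> e e0 H; apply: H => S; rewrite subrr normr0. Qed.

Lemma int_add u v : K u -> winterior K v -> winterior K (fun S => u S + v S).
Proof.
move=> Ku [e e0 H]; exists e => // w Hw.
have Kwu : K (fun S => w S - u S).
  by apply: H => S; rewrite -addrA -opprD; exact: Hw.
by apply: (KC2 Ku Kwu ler01 ler01) => S; rewrite !mul1r addrC subrK.
Qed.


Lemma int_scale (c : R) v : 0 < c -> winterior K v -> winterior K (fun S => c * v S).
Proof.
move=> c0 [e e0 H]; exists (c * e); first by rewrite mulr_gt0.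
move=> w Hw.
have Kw : K (fun S => c^-1 * w S).
  apply: H => S; rewrite -(ltr_pM2l c0) -[X in X * `|_|](gtr0_norm c0) -normrM mulrBr.
  by rewrite mulrA mulfV ?gt_eqF // mul1r.
by apply: (KZ1 Kw (ltW c0)) => S; rewrite mulrA mulfV ?gt_eqF // mul1r.
Qed.

Lemma int_nz v : winterior K v -> ~ (forall S, v S = 0).
Proof.
move=> [e e0 H] v0.
have e2 : 0 < e / 2 by rewrite divr_gt0.
have h2 : e / 2 < e by rewrite ltr_pdivrMr // ltr_pMr // ltr1n.
have K1 : K (fun _ => e / 2).
  by apply: H => S; rewrite v0 subr0 gtr0_norm.
have K2 : K (fun _ => - (e / 2)).
  by apply: H => S; rewrite v0 subr0 normrN gtr0_norm.
by have := Kpt K1 K2 S0; move/eqP; rewrite gt_eqF.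
Qed.

Lemma Ksum (I : finType) (f : I -> wvec R n j) :
  (forall i, K (f i)) -> K (fun S => \sum_(i : I) f i S).
Proof.
move=> Kf; suff H : forall s : seq I, K (fun S => \sum_(i <- s) f i S) by apply: H.
elim => [|i s IH]; first by apply: (Kext K0) => S; rewrite big_nil.
by apply: (KC2 (Kf i) IH ler01 ler01) => S; rewrite big_cons !mul1r.
Qed.

Lemma Kbound (p : wvec R n j) (e : R) : 0 < e ->
  (forall w, (forall S, `|w S - p S| < e) -> K w) ->
  forall y, K (fun S => nrm y * p S - e / 2 * y S).
Proof.
move=> e0 H y.
have [ny0|ny0] := eqVneq (nrm y) 0.
  by apply: (Kext K0) => S; rewrite ny0 (nrm_eq0 ny0) mul0r mulr0 subrr.
have nyp : 0 < nrm y by rewrite lt_def ny0 nrm_ge0.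
have Kw : K (fun S => p S - e / 2 / nrm y * y S).
  apply: H => S; rewrite addrAC subrr add0r normrN normrM.
  rewrite gtr0_norm ?divr_gt0 //.
  apply: (le_lt_trans (ler_wpM2l _ (nrm_ge y S))); first by rewrite ltW // divr_gt0 ?divr_gt0.
  rewrite divfK //; by rewrite ltr_pdivrMr // ltr_pMr // ltr1n.
apply: (KZ1 Kw (ltW nyp)) => S; rewrite mulrBr; congr (_ - _).
by rewrite mulrA mulrCA divff // mulr1.
Qed.

End Cone.

Section Oper.
Variables (R : realType) (n j : nat) (A : 'M[R]_n).
Implicit Types (u v w : wvec R n j).
Local Notation B := (wedge_op A).

Lemma BL2 (a b : R) u v :
  B (fun S => a * u S + b * v S) = (fun S => a * B u S + b * B v S).
Proof.
apply: funext => S; rewrite /wedge_op big_distrr big_distrr -big_split /=.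
by apply: eq_bigr => T _; rewrite mulrDr !mulrA !(mulrC _ a) !(mulrC _ b).
Qed.

Lemma BZ (c : R) u : B (fun S => c * u S) = (fun S => c * B u S).
Proof.
apply: funext => S; rewrite /wedge_op big_distrr /=.
by apply: eq_bigr => T _; rewrite mulrCA.
Qed.

Lemma Bsum (I : finType) (f : I -> wvec R n j) :
  B (fun S => \sum_(i : I) f i S) = (fun S => \sum_(i : I) B (f i) S).
Proof.
apply: funext => S; rewrite /wedge_op exchange_big /=.
by apply: eq_bigr => T _; rewrite big_distrr.
Qed.

Lemma Bdiff (a b : R) u v S :
  B (fun T => a * u T - b * v T) S = a * B u S - b * B v S.
Proof.
rewrite /wedge_op !big_distrr -sumrB /=.
by apply: eq_bigr => T _; rewrite /=; ring.
Qed.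

Lemma B0 u : (forall S, u S = 0) -> forall S, B u S = 0.
Proof. by move=> u0 S; rewrite /wedge_op big1 // => T _; rewrite u0 mulr0. Qed.

Definition Lc : R :=
  \big[Num.max/0]_(S : jsub n j) \sum_(T : jsub n j)
     `|\det (subm A (val S) (val T) j)| + 1.

Lemma Lc_gt0 : 0 < Lc.
Proof. by rewrite ltr_wpDl ?nrm_ge0 //; apply: bigmax_ge_id. Qed.

Lemma BL u v S : `|B u S - B v S| <= Lc * nrm (fun k => u k - v k).
Proof.
rewrite /wedge_op -sumrB.
apply: (le_trans (ler_norm_sum _ _ _)).
apply: (@le_trans _ _ (\sum_T `|\det (subm A (val S) (val T) j)| *
   nrm (fun k => u k - v k))).
  apply: ler_sum => T _; rewrite -mulrBr normrM ler_wpM2l //.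
  exact: (nrm_ge (fun k => u k - v k)).
rewrite -big_distrl /= ler_wpM2r ?nrm_ge0 //.
apply: (@le_trans _ _ (Lc - 1)); last by rewrite lerBlDr lerDl.
rewrite /Lc addrK; exact: (le_bigmax _ _ S).
Qed.

End Oper.

Lemma geom (R : realType) (eta C : R) : 0 < eta -> eta <= 1 -> 0 <= C ->
  exists k : nat, (1 - eta) ^+ k * C < 1.
Proof.
move=> e0 e1 C0.
have bern : forall k : nat, (1 + k%:R * eta) * (1 - eta) ^+ k <= 1.
  elim => [|k IH]; first by rewrite expr0 mul0r addr0 mulr1.
  have t0 : 0 <= (1 - eta) ^+ k by rewrite exprn_ge0 // subr_ge0.
  have h : (1 + k.+1%:R * eta) * (1 - eta) <= 1 + k%:R * eta.
    have k0 : 0 <= k%:R :> R by rewrite ler0n.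
    rewrite -natr1; nra.
  rewrite exprS mulrA; apply: le_trans IH; exact: ler_wpM2r.
have Ce : 0 <= C / eta by rewrite divr_ge0 // ltW.
have := archi_boundP Ce; set k := (X in X%:R) => Hk.
exists k; have := bern k.
have D0 : 0 < 1 + k%:R * eta by rewrite ltr_wpDr // mulr_ge0 ?ler0n // ltW.
have : C < k%:R * eta by rewrite -ltr_pdivrMr.
set X := (1 - eta) ^+ k => h1 h2.
have X0 : 0 <= X by rewrite exprn_ge0 // subr_ge0.
nra.
Qed.

Section Core.
Variables (R : realType) (n j : nat) (A : 'M[R]_n) (K : wvec R n j -> Prop).
Hypotheses (Kcl : wclosed K) (Kcc : convex_cone K) (Kpt : pointed K) (S0 : jsub n j).
Local Notation B := (wedge_op A).
Hypothesis BP : forall v, K v -> ~ (forall S, v S = 0) -> winterior K (B v).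
Variables (p : wvec R n j) (dl : R).
Hypotheses (dl0 : 0 < dl) (Hp : forall w, (forall S, `|w S - p S| < dl) -> K w).
Implicit Types (u v w z q : wvec R n j).

Lemma BK u : K u -> K (B u).
Proof.
move=> Ku; have [u0|u0] := pselect (forall S, u S = 0).
  by apply: (Kext (K0 Kcc)) => S; rewrite B0.
exact: int_K (BP Ku u0).
Qed.

Lemma nrmB u : nrm (B u) <= (@Lc R n j A) * nrm u.
Proof.
apply: nrm_le => [|S]; first by rewrite mulr_ge0 ?nrm_ge0 // ltW // Lc_gt0.
have := BL A u (fun _ => 0) S; rewrite (@B0 _ _ _ A (fun _ => 0)) // subr0.
by have -> : (fun k => u k - 0) = u by apply: funext => k; rewrite subr0.
Qed.

Lemma alphaH : exists2 al : R, 0 < al &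
  forall z, K z -> K (fun S => B z S - al * nrm z * p S).
Proof.
have pos : forall z, K z -> 1 <= nrm z -> winterior K (B z).
  move=> z Kz nz; apply: (BP Kz) => z0.
  have : nrm z <= 0 by apply: nrm_le => // S; rewrite z0 normr0.
  by move/(le_trans nz); rewrite ler10.
have [al al0 Hal] := @alpha_ex R (jsub n j) K B ((@Lc R n j A)) p (@Lc_gt0 R n j A) Kcl (BL A) pos.
  exists al => // z Kz.
  have [nz0|nz0] := eqVneq (nrm z) 0.
    apply: (Kext (K0 Kcc)) => S; rewrite nz0 mulr0 mul0r subr0 B0 //.
    exact: nrm_eq0.
  have nzp : 0 < nrm z by rewrite lt_def nz0 nrm_ge0.
  pose z' := fun S => (nrm z)^-1 * z S.
  have Kz' : K z'.
    by apply: (KZ1 Kcc Kz (_ : 0 <= (nrm z)^-1)); rewrite // invr_ge0 ltW.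
  have nz' : nrm z' = 1 by rewrite /z' nrmZ gtr0_norm ?invr_gt0 // mulVf.
  have n1 : 1 <= nrm z' by rewrite nz'.
  have b1 : forall S, `|z' S| <= 1 by move=> S; rewrite -nz'; exact: nrm_ge.
  have := Hal z' Kz' n1 b1.
  rewrite /z' BZ => H.
  apply: (KZ1 Kcc H (ltW nzp)) => S.
  by rewrite mulrBr mulrA mulfV ?mul1r // mulrCA mulrA.
Qed.


Lemma contr_ex : exists eta : R, [/\ 0 < eta, eta <= 1 / 2 &
  forall z w, K z -> K w ->
    K (fun S => B z S - eta * B (fun T => z T + w T) S) \/
    K (fun S => B w S - eta * B (fun T => z T + w T) S)].
Proof.
have [al al0 Hal] := alphaH.
set L := @Lc R n j A; have L0 : 0 < L := @Lc_gt0 R n j A.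
pose eta := Num.min (al * dl / (4 * L)) (1 / 2).
have eta0 : 0 < eta by rewrite lt_min !divr_gt0 ?mulr_gt0.
have eta_le : eta <= 1 / 2 by rewrite ge_min lexx orbT.
have etale : eta <= al * dl / (4 * L) by rewrite ge_min lexx.
have one : forall z q, K z -> K q -> nrm q <= 2 * nrm z ->
    K (fun S => B z S - eta * B q S).
  move=> z q Kz Kq nq.
  have [nz0|nz0] := eqVneq (nrm z) 0.
    have q0 : nrm q = 0.
      by apply/eqP; rewrite eq_le nrm_ge0 andbT; move: nq; rewrite nz0 mulr0.
    apply: (Kext (K0 Kcc)) => S.
    by rewrite (@B0 _ _ _ A q) ?(@B0 _ _ _ A z) ?mulr0 ?subr0 //; apply: nrm_eq0.
  have c0 : 0 < nrm z by rewrite lt_def nz0 nrm_ge0.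
  set c := nrm z in nq c0 nz0 *.
  set nq' := nrm (B q).
  have h1 := Hal z Kz; rewrite -/c in h1.
  have h2 := Kbound Kcc dl0 Hp (B q); rewrite -/nq' in h2.
  have h3 := BK Kq; have h4 := BK Kz.
  have hX : K (fun S => nq' * B z S - al * c * (dl / 2) * B q S).
    apply: (KC2 Kcc h1 h2 (nrm_ge0 (B q) : 0 <= nq') (_ : 0 <= al * c)) => [|S].
      by rewrite mulr_ge0 // ltW.
    rewrite /=; ring.
  have nq'le : nq' <= 2 * L * c.
    apply: (le_trans (nrmB q)); rewrite -/L.
    have -> : 2 * L * c = L * (2 * c) by ring.
    by rewrite ler_wpM2l // ltW.
  have hY : K (fun S => 2 * L * c * B z S - al * c * (dl / 2) * B q S).
    apply: (KC2 Kcc hX h4 ler01 (_ : 0 <= 2 * L * c - nq')) => [|S].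
      by rewrite subr_ge0.
    rewrite /=; ring.
  have hZ : K (fun S => B z S - al * dl / (4 * L) * B q S).
    apply: (KZ1 Kcc hY (_ : 0 <= (2 * L * c)^-1)) => [|S].
      by rewrite invr_ge0 !mulr_ge0 // ltW.
    rewrite /=; field; rewrite ?gt_eqF //; lra.
  apply: (KC2 Kcc hZ h3 ler01 (_ : 0 <= al * dl / (4 * L) - eta)) => [|S].
    by rewrite subr_ge0.
  rewrite /=; ring.
exists eta; split => // z w Kz Kw.
have Kq : K (fun T => z T + w T).
  by apply: (KC2 Kcc Kz Kw ler01 ler01) => S; rewrite !mul1r.
have hq := nrmD z w.
have [zw|wz] := leP (nrm w) (nrm z).
  by left; apply: one => //; lra.
by right; apply: one => //; lra.
Qed.


Lemma iter_K k u : K u -> K (iter k B u).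
Proof. by move=> Ku; elim: k => //= k IH; apply: BK. Qed.

Lemma iter_int k : winterior K (iter k B p).
Proof.
elim: k => [|k IH] /=; first by exists dl.
exact: BP (int_K IH) (int_nz Kpt S0 IH).
Qed.

Lemma iter_sum k (f : jsub n j -> wvec R n j) :
  iter k B (fun S => \sum_i f i S) = (fun S => \sum_i iter k B (f i) S).
Proof. by elim: k => //= k ->; rewrite Bsum. Qed.

Lemma iter_simple k v : simple_vec v -> simple_vec (iter k B v).
Proof. by move=> sv; elim: k => //= k IH; apply: simple_B. Qed.

Lemma iter_bounds (eta : R) : 0 <= 1 - eta ->
  (forall z w, K z -> K w ->
    K (fun S => B z S - eta * B (fun T => z T + w T) S) \/
    K (fun S => B w S - eta * B (fun T => z T + w T) S)) ->
  forall x a0 b0, K (fun S => x S - a0 * p S) -> K (fun S => b0 * p S - x S) ->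
  forall k, exists a b, [/\ b - a <= (1 - eta) ^+ k * (b0 - a0),
     K (fun S => iter k B x S - a * iter k B p S) &
     K (fun S => b * iter k B p S - iter k B x S)].
Proof.
move=> eta1 Heta x a0 b0 Ka Kb; elim => [|k [a [b [Hab Ky Kq]]]].
  by exists a0, b0; rewrite expr0 mul1r.
set y := iter k B x in Ky Kq *; set q := iter k B p in Ky Kq *.
rewrite !iterS -/y -/q.
have Bzw : forall S, B (fun T => (b * q T - y T) + (y T - a * q T)) S = (b - a) * B q S.
  move=> S; have -> : (fun T => (b * q T - y T) + (y T - a * q T)) =
     (fun T => (b - a) * q T - 0 * q T) by apply: funext => T; ring.
  by rewrite Bdiff mul0r subr0.
have Bz : forall S, B (fun T => b * q T - y T) S = b * B q S - B y S.
  move=> S; have -> : (fun T => b * q T - y T) = (fun T => b * q T - 1 * y T).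
    by apply: funext => T; rewrite mul1r.
  by rewrite Bdiff mul1r.
have Bw : forall S, B (fun T => y T - a * q T) S = B y S - a * B q S.
  move=> S; have -> : (fun T => y T - a * q T) = (fun T => 1 * y T - a * q T).
    by apply: funext => T; rewrite mul1r.
  by rewrite Bdiff mul1r.
have KBw : K (fun S => B y S - a * B q S) by apply: (Kext (BK Ky)) => S; rewrite Bw.
have KBz : K (fun S => b * B q S - B y S) by apply: (Kext (BK Kq)) => S; rewrite Bz.
have Hk : (1 - eta) * (b - a) <= (1 - eta) ^+ k.+1 * (b0 - a0).
  by rewrite exprS -mulrA ler_wpM2l.
case: (Heta _ _ Kq Ky) => H.
  exists a, (b - eta * (b - a)); split => //.
    by apply: le_trans Hk; rewrite le_eqVlt; apply/orP; left; apply/eqP; ring.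
  by apply: (Kext H) => S; rewrite Bz Bzw; ring.
exists (a + eta * (b - a)), b; split => //.
  by apply: le_trans Hk; rewrite le_eqVlt; apply/orP; left; apply/eqP; ring.
by apply: (Kext H) => S; rewrite Bw Bzw; ring.
Qed.

Lemma exists_simple (b0 : 'I_j) :
  exists v, [/\ winterior K v, simple_vec v & ~ (forall S, v S = 0)].
Proof.
have [eta [eta0 eta_le Heta]] := contr_ex.
have eta1' : eta <= 1.
  by apply: (le_trans eta_le); rewrite ler_pdivrMr // mul1r ler1n.
have eta1 : 0 <= 1 - eta by rewrite subr_ge0.
pose x (S : jsub n j) : wvec R n j := fun T => if T == S then p S else 0.
pose a0 S := - (2 * nrm (x S) / dl).
pose b0' S := 2 * nrm (x S) / dl.
have Ka S : K (fun T => x S T - a0 S * p T).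
  have := Kbound Kcc dl0 Hp (fun T => - x S T); rewrite nrmN => H.
  apply: (KZ1 Kcc H (_ : 0 <= 2 / dl)) => [|T]; first by rewrite divr_ge0 // ltW.
  by rewrite /a0 /=; field; rewrite gt_eqF.
have Kb S : K (fun T => b0' S * p T - x S T).
  have := Kbound Kcc dl0 Hp (x S) => H.
  apply: (KZ1 Kcc H (_ : 0 <= 2 / dl)) => [|T]; first by rewrite divr_ge0 // ltW.
  by rewrite /b0' /=; field; rewrite gt_eqF.
pose C := \sum_S (b0' S - a0 S).
have C0 : 0 <= C.
  apply: sumr_ge0 => S _; rewrite /b0' /a0 opprK addr_ge0 //;
    by rewrite divr_ge0 ?mulr_ge0 ?nrm_ge0 // ltW.
have [k Hk] := geom eta0 eta1' C0.
have HS : forall S, exists ab : R * R,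
   [/\ ab.2 - ab.1 <= (1 - eta) ^+ k * (b0' S - a0 S),
     K (fun T => iter k B (x S) T - ab.1 * iter k B p T) &
     K (fun T => ab.2 * iter k B p T - iter k B (x S) T)].
  move=> S; have [a [b H]] := iter_bounds eta1 Heta (Ka S) (Kb S) k.
  by exists (a, b).
have [f Hf] := choice HS.
pose q := iter k B p.
have qsum : forall T, q T = \sum_S iter k B (x S) T.
  move=> T; rewrite /q.
  have -> : p = fun T => \sum_S x S T.
    apply: funext => T'; rewrite (bigD1 T') //= /x eqxx big1 ?addr0 //.
    by move=> S /negbTE; rewrite eq_sym => ->.
  by rewrite iter_sum.
have [S aS] : exists S, 0 < (f S).1.
  case: (pselect (exists S, 0 < (f S).1)) => // nS; exfalso.
  have a_le : forall S, (f S).1 <= 0.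
    by move=> S; rewrite leNgt; apply/negP => h; apply: nS; exists S.
  have Kq' : K (fun T => \sum_S ((f S).2 * q T - iter k B (x S) T)).
    by apply: (Ksum Kcc) => S; case: (Hf S).
  set sb := \sum_S (f S).2.
  have Kneg : K (fun T => (sb - 1) * q T).
    apply: (Kext Kq') => T; rewrite sumrB -mulr_suml -qsum /sb; ring.
  have sb_lt : sb < 1.
    apply: le_lt_trans Hk; apply: (@le_trans _ _ (\sum_S ((f S).2 - (f S).1))).
      by apply: ler_sum => S _; rewrite lerDl oppr_ge0.
    rewrite /C mulr_sumr; apply: ler_sum => S _; by case: (Hf S).
  have Kmq : K (fun T => - q T).
    apply: (KZ1 Kcc Kneg (_ : 0 <= (1 - sb)^-1)) => [|T].
      by rewrite invr_ge0 subr_ge0 ltW.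
    rewrite /=; field; rewrite subr_eq0 eq_sym lt_eqF //.
  have := Kpt (int_K (iter_int k)) Kmq.
  exact: (int_nz Kpt S0 (iter_int k)).
case: (Hf S) => _ KX _.
set X := iter k B (x S) in KX *.
have intX : winterior K X.
  have -> : X = fun T => (X T - (f S).1 * q T) + (f S).1 * q T.
    by apply: funext => T; rewrite subrK.
  apply: int_add => //; apply: int_scale => //; exact: iter_int.
exists X; split; [exact: intX| |exact: (int_nz Kpt S0 intX)].
by apply: iter_simple; exact: basis_simple.
Qed.

End Core.

Theorem corollary23 (R : realType) (n : nat)
  (K : forall j : nat, wvec R n j -> Prop) :
  STP_structure K ->
  forall j : nat, (2 <= j <= n)%N ->
  exists v : wvec R n j,
    [/\ winterior (K j) v, simple_vec v & ~ (forall S, v S = 0)].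
Proof.
move=> [TP [A GA]] j /andP [j2 jn].
have j1 : (0 < j)%N by apply: leq_trans j2.
have j1n : (1 <= j <= n)%N by rewrite j1 jn.
have [Kcl Kcc Kpt [p [dl dl0 Hp]]] := TP j j1n.
pose S0set := [set widen_ord jn a | a : 'I_j].
have cS : #|S0set| == j.
  rewrite card_imset ?card_ord // => a b /(congr1 val) /= E; exact: val_inj.
pose S0 : jsub n j := exist (fun S : {set 'I_n} => #|S| == j) S0set cS.
have BP := GA j j1n.
exact: (exists_simple Kcl Kcc Kpt S0 BP dl0 Hp (Ordinal j1)).
Qed.
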